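(* If $F$ is a bounded below semi-free DG $B$-module with semi-basis $G$, then $F\cong N$ for some appropriate choices of $R$-module homomorphisms $\xi_i$, $\tau_i$, $\alpha_i$, and $\delta_i$ satisfying, for all integers $i$ and $j$, $\xi_i=-\alpha_i$, $\tau_i=t$, $\alpha_{i-1}\alpha_i=-t\delta_i$, $\delta_i\alpha_{i+1}=\alpha_{i-1}\delta_{i+1}$, $\delta_{i+j}(\gamma_{i,s} m_j)=\gamma_{i,s} \delta_j(m_j)$, and $\alpha_{i+j}(\gamma_{i,s} m_j)=\partial_i^A(\gamma_{i,s})m_j+(-1)^i\gamma_{i,s}\alpha_j(m_j)$ for $s=1,\ldots,r_i$ and all $m_j\in M_j$, where $\beta_i=|G\cap F_i|$.
   Context: Let $R$ be a commutative noetherian ring. Let $A$ be a (commutative, positively graded) DG $R$-algebra such that each $A_i$ is free over $R$ of finite rank, with fixed basis $\{\gamma_{i,1},\ldots,\gamma_{i,r_i}\}$ of $A_i$. Let $t\in R$ and $B=K^R(t)\otimes_R A$, where $K^R(t)$ is the Koszul complex on $t$; identify $B_i$ with $A_{i-1}\oplus A_i$ (column vectors), so that $\partial^B_i=\left[\begin{smallmatrix}-\partial^A_{i-1} & 0\\ t & \partial^A_i\end{smallmatrix}\right]$. For cardinals $\beta_i$ ($\beta_i=0$ for $i\ll0$) set $M_i=\bigoplus_{j\ge0}A_j^{(\beta_{i-j})}$. Given $R$-linear maps $\xi_i\colon M_i\to M_{i-1}$, $\tau_i\colon M_i\to M_i$, $\delta_i\colon M_i\to M_{i-2}$, $\alpha_i\colon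 M_i\to M_{i-1}$, let $N$ be the sequence with $N_i=M_{i-1}\oplus M_i$ and $\partial^N_i=\left[\begin{smallmatrix}\xi_{i-1}&\delta_i\\ \tau_{i-1}&\alpha_i\end{smallmatrix}\right]$, with $B$ acting by $\left[\begin{smallmatrix}a_{i-1}\\ a_i\end{smallmatrix}\right]\left[\begin{smallmatrix}m_{j-1}\\ m_j\end{smallmatrix}\right]=\left[\begin{smallmatrix}a_{i-1}m_j+(-1)^ia_im_{j-1}\\ a_im_j\end{smallmatrix}\right]$. *)

(* Defs.v *)
From HB Require Import structures.
From mathcomp Require Import all_boot all_order all_algebra.
Set Implicit Arguments.
Unset Strict Implicit.
Unset Printing Implicit Defensive.
Import GRing.Theory.
Local Open Scope ring_scope.

Definition dcast (V : int -> Type) (m n : int) (e : m = n) (x : V m) : V n :=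
  eq_rect m V x n e.

Lemma tcast0 (R : pzRingType) (V : int -> lmodType R) (m n : int) (e : m = n) :
  @dcast (fun k => V k) m n e 0 = 0.
Proof. by case: n / e. Qed.

Definition sgn (R : pzRingType) (i : int) : R := (-1) ^+ absz i.

Lemma eqL1 (i j : int) : i - 1 + j = i + j - 1.
Proof. by rewrite -addrA (addrC (-1)) addrA. Qed.
Lemma eqL2 (i j : int) : i + (j - 1) = i + j - 1.
Proof. by rewrite addrA. Qed.
Lemma eqS2 (i j : int) : i + (j - 1 - 1) = i + j - 1 - 1.
Proof. by rewrite !addrA. Qed.

Definition is_ideal (R : comPzRingType) (I : R -> Prop) : Prop :=
  I 0 /\ (forall x y, I x -> I y -> I (x + y)) /\ (forall r x, I x -> I (r * x)).
Definition noetherian (R : comPzRingType) : Prop :=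
  forall I : nat -> R -> Prop, (forall n, is_ideal (I n)) ->
    (forall n x, I n x -> I n.+1 x) ->
    exists n, forall m x, (n <= m)%N -> I m x -> I n x.

Unset Implicit Arguments.
Record dga (R : comPzRingType) := DGA {
  Ac : int -> lmodType R;
  Amul : forall i j, Ac i -> Ac j -> Ac (i + j);
  Aone : Ac 0;
  Ad : forall i, Ac i -> Ac (i - 1);
  Ar : int -> nat;
  Agam : forall i, 'I_(Ar i) -> Ac i;
  Amul_linl : forall i j (b : Ac j) (r : R) (x y : Ac i),
    Amul i j (r *: x + y) b = r *: Amul i j x b + Amul i j y b;
  Amul_linr : forall i j (a : Ac i) (r : R) (x y : Ac j),
    Amul i j a (r *: x + y) = r *: Amul i j a x + Amul i j a y;
  Amul_assoc : forall i j k (a : Ac i) (b : Ac j) (c : Ac k),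
    Amul (i + j) k (Amul i j a b) c =
    @dcast (fun n => Ac n) _ _ (addrA i j k) (Amul i (j + k) a (Amul j k b c));
  Amul_1l : forall i (a : Ac i),
    @dcast (fun n => Ac n) _ _ (add0r i) (Amul 0 i Aone a) = a;
  Amul_1r : forall i (a : Ac i),
    @dcast (fun n => Ac n) _ _ (addr0 i) (Amul i 0 a Aone) = a;
  Amul_comm : forall i j (a : Ac i) (b : Ac j),
    Amul i j a b = sgn R (i * j) *: @dcast (fun n => Ac n) _ _ (addrC j i) (Amul j i b a);
  Ad_lin : forall i (r : R) (x y : Ac i), Ad i (r *: x + y) = r *: Ad i x + Ad i y;
  Ad_sq : forall i (a : Ac i), Ad (i - 1) (Ad i a) = 0;
  Ad_leibniz : forall i j (a : Ac i) (b : Ac j),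
    Ad (i + j) (Amul i j a b) =
      @dcast (fun n => Ac n) _ _ (eqL1 i j) (Amul (i - 1) j (Ad i a) b)
    + sgn R i *: @dcast (fun n => Ac n) _ _ (eqL2 i j) (Amul i (j - 1) a (Ad j b));
  Apos : forall i (a : Ac i), i < 0 -> a = 0;
  Abasis_span : forall i (a : Ac i),
    exists c : 'I_(Ar i) -> R, a = \sum_(s < Ar i) c s *: Agam i s;
  Abasis_free : forall i (c : 'I_(Ar i) -> R),
    \sum_(s < Ar i) c s *: Agam i s = 0 -> forall s, c s = 0
}.
Set Implicit Arguments.
Arguments Ac {R} d i. Arguments Amul {R} d i j _ _. Arguments Aone {R} d.
Arguments Ad {R} d i _. Arguments Ar {R} d i. Arguments Agam {R} d i _.

Lemma Amul0r (R : comPzRingType) (A : dga R) i j (a : Ac A i) :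
  Amul A i j a 0 = 0.
Proof.
have h := @Amul_linr R A i j a 1 0 0; rewrite !scale1r addr0 in h.
by apply: (@addrI _ (Amul A i j a 0)); rewrite addr0 -h.
Qed.

Definition Bc (R : comPzRingType) (A : dga R) (i : int) : lmodType R :=
  (Ac A (i - 1) * Ac A i)%type.

Definition mulB (R : comPzRingType) (A : dga R) (i j : int)
    (b : Bc A i) (c : Bc A j) : Bc A (i + j) :=
  ( @dcast (fun n => Ac A n) _ _ (eqL1 i j) (Amul A (i - 1) j b.1 c.2)
    + sgn R i *: @dcast (fun n => Ac A n) _ _ (eqL2 i j) (Amul A i (j - 1) b.2 c.1),
    Amul A i j b.2 c.2 ).

Definition oneB (R : comPzRingType) (A : dga R) : Bc A 0 := (0, Aone A).

Definition dB (R : comPzRingType) (A : dga R) (t : R) (i : int) (b : Bc A i) :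
    Bc A (i - 1) :=
  ( - Ad A (i - 1) b.1, t *: b.1 + Ad A i b.2 ).

Unset Implicit Arguments.
Record dgmodB (R : comPzRingType) (A : dga R) (t : R) := DGMod {
  Fc : int -> lmodType R;
  Fact : forall i j, Bc A i -> Fc j -> Fc (i + j);
  Fd : forall j, Fc j -> Fc (j - 1);
  Fact_linl : forall i j (x : Fc j) (r : R) (b c : Bc A i),
    Fact i j (r *: b + c) x = r *: Fact i j b x + Fact i j c x;
  Fact_linr : forall i j (b : Bc A i) (r : R) (x y : Fc j),
    Fact i j b (r *: x + y) = r *: Fact i j b x + Fact i j b y;
  Fact_assoc : forall i j k (b : Bc A i) (c : Bc A j) (x : Fc k),
    Fact (i + j) k (mulB b c) x =
    @dcast (fun n => Fc n) _ _ (addrA i j k) (Fact i (j + k) b (Fact j k c x));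
  Fact_one : forall j (x : Fc j),
    @dcast (fun n => Fc n) _ _ (add0r j) (Fact 0 j (oneB A) x) = x;
  Fd_lin : forall j (r : R) (x y : Fc j), Fd j (r *: x + y) = r *: Fd j x + Fd j y;
  Fd_sq : forall j (x : Fc j), Fd (j - 1) (Fd j x) = 0;
  Fd_leibniz : forall i j (b : Bc A i) (x : Fc j),
    Fd (i + j) (Fact i j b x) =
      @dcast (fun n => Fc n) _ _ (eqL1 i j) (Fact (i - 1) j (dB t b) x)
    + sgn R i *: @dcast (fun n => Fc n) _ _ (eqL2 i j) (Fact i (j - 1) b (Fd j x))
}.
Set Implicit Arguments.
Arguments dgmodB {R} A t. Arguments Fc {R A t} d i. Arguments Fact {R A t} d i j _ _. Arguments Fd {R A t} d j _.

Definition bounded_below (R : comPzRingType) (A : dga R) (t : R) (F : dgmodB A t) :=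
  exists n0 : int, forall i (x : Fc F i), i < n0 -> x = 0.

Definition Flincomb (R : comPzRingType) (A : dga R) (t : R) (F : dgmodB A t)
    (n : int) (c : forall l, Fc F l -> Bc A (n - l))
    (s : seq {l : int & Fc F l}) : Fc F n :=
  \sum_(p <- s) @dcast (fun k => Fc F k) _ _ (subrK (tag p) n)
                  (Fact F (n - tag p) (tag p) (c (tag p) (tagged p)) (tagged p)).

(* G (given degreewise: G l = G \cap F_l) is a semi-basis: a basis of the
   underlying graded B^natural-module F^natural consisting of homogeneous
   elements *)
Definition semi_basis (R : comPzRingType) (A : dga R) (t : R) (F : dgmodB A t)
    (G : forall l, Fc F l -> Prop) : Prop :=
  (forall n (x : Fc F n), exists (c : forall l, Fc F l -> Bc A (n - l))
       (s : seq {l : int & Fc F l}),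
     [/\ uniq s, (forall p, p \in s -> G (tag p) (tagged p)) & x = Flincomb c s])
  /\
  (forall n (c : forall l, Fc F l -> Bc A (n - l)) (s : seq {l : int & Fc F l}),
     uniq s -> (forall p, p \in s -> G (tag p) (tagged p)) ->
     Flincomb c s = 0 -> forall p, p \in s -> c (tag p) (tagged p) = 0).

(* An element of M_j is a finitely supported family (m_{l,g}) with
   g ranging over G \cap F_l and m_{l,g} in A_{j-l}. *)
Definition Mfun (R : comPzRingType) (A : dga R) (t : R) (F : dgmodB A t) (j : int) :=
  forall l, Fc F l -> Ac A (j - l).

Definition Madm (R : comPzRingType) (A : dga R) (t : R) (F : dgmodB A t)
    (G : forall l, Fc F l -> Prop) (j : int) (f : Mfun F j) : Prop :=
  (forall l x, ~ G l x -> f l x = 0) /\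
  exists s : seq {l : int & Fc F l},
    forall l x, f l x <> 0 -> existT (fun k => Fc F k) l x \in s.

Record Mt (R : comPzRingType) (A : dga R) (t : R) (F : dgmodB A t)
    (G : forall l, Fc F l -> Prop) (j : int) := MT {
  mfun : Mfun F j;
  mP : Madm G mfun
}.
Arguments mfun {R A t F G j} m l x.


Lemma Mzero_adm (R : comPzRingType) (A : dga R) (t : R) (F : dgmodB A t)
    (G : forall l, Fc F l -> Prop) j : Madm G (fun l (x : Fc F l) => (0 : Ac A (j - l))).
Proof. by split=> //; exists [::] => l x. Qed.

Lemma Mlin_adm (R : comPzRingType) (A : dga R) (t : R) (F : dgmodB A t)
    (G : forall l, Fc F l -> Prop) j (r : R) (m1 m2 : Mt G j) :
  Madm G (fun l x => r *: mfun m1 l x + mfun m2 l x).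
Proof.
case: m1 m2 => [f1 [z1 [s1 S1]]] [f2 [z2 [s2 S2]]] /=; split.
  by move=> l x Gx; rewrite z1 // z2 // scaler0 addr0.
exists (s1 ++ s2) => l x h; rewrite mem_cat; apply/orP.
have [e1|n1] := eqVneq (f1 l x) 0; last by left; apply: S1; apply/eqP.
have [e2|n2] := eqVneq (f2 l x) 0; last by right; apply: S2; apply/eqP.
by case: h; rewrite e1 e2 scaler0 addr0.
Qed.

Definition Mzero (R : comPzRingType) (A : dga R) (t : R) (F : dgmodB A t)
    (G : forall l, Fc F l -> Prop) j : Mt G j := MT (Mzero_adm G j).

Definition Mlin (R : comPzRingType) (A : dga R) (t : R) (F : dgmodB A t)
    (G : forall l, Fc F l -> Prop) j (r : R) (m1 m2 : Mt G j) : Mt G j :=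
  MT (Mlin_adm r m1 m2).

Definition Madd (R : comPzRingType) (A : dga R) (t : R) (F : dgmodB A t)
    (G : forall l, Fc F l -> Prop) j (m1 m2 : Mt G j) : Mt G j := Mlin 1 m1 m2.
Definition Mscale (R : comPzRingType) (A : dga R) (t : R) (F : dgmodB A t)
    (G : forall l, Fc F l -> Prop) j (r : R) (m : Mt G j) : Mt G j :=
  Mlin r m (Mzero G j).
Definition Mopp (R : comPzRingType) (A : dga R) (t : R) (F : dgmodB A t)
    (G : forall l, Fc F l -> Prop) j (m : Mt G j) : Mt G j := Mscale (-1) m.

Lemma MactA_adm (R : comPzRingType) (A : dga R) (t : R) (F : dgmodB A t)
    (G : forall l, Fc F l -> Prop) i j (a : Ac A i) (m : Mt G j) :
  Madm G (fun l x => @dcast (fun n => Ac A n) _ _ (addrA i j (- l))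
                        (Amul A i (j - l) a (mfun m l x))).
Proof.
case: m => [f [z [s S]]] /=; split.
  by move=> l x Gx; rewrite z // Amul0r tcast0.
exists s => l x h; have [e|n] := eqVneq (f l x) 0; last by apply: S; apply/eqP.
by case: h; rewrite e Amul0r tcast0.
Qed.

Definition MactA (R : comPzRingType) (A : dga R) (t : R) (F : dgmodB A t)
    (G : forall l, Fc F l -> Prop) i j (a : Ac A i) (m : Mt G j) : Mt G (i + j) :=
  MT (MactA_adm a m).
Arguments MactA {R A t F G} i j a m.

Definition Mlinear (R : comPzRingType) (A : dga R) (t : R) (F : dgmodB A t)
    (G : forall l, Fc F l -> Prop) j k (f : Mt G j -> Mt G k) : Prop :=
  forall r m1 m2, f (Mlin r m1 m2) = Mlin r (f m1) (f m2).

Definition Nt (R : comPzRingType) (A : dga R) (t : R) (F : dgmodB A t)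
    (G : forall l, Fc F l -> Prop) (i : int) := (Mt G (i - 1) * Mt G i)%type.

Definition dN (R : comPzRingType) (A : dga R) (t : R) (F : dgmodB A t)
    (G : forall l, Fc F l -> Prop)
    (xi : forall i, Mt G i -> Mt G (i - 1)) (tau : forall i, Mt G i -> Mt G i)
    (delta : forall i, Mt G i -> Mt G (i - 1 - 1))
    (alpha : forall i, Mt G i -> Mt G (i - 1)) (i : int) (n : Nt G i) : Nt G (i - 1) :=
  ( Madd (xi (i - 1) n.1) (delta i n.2), Madd (tau (i - 1) n.1) (alpha i n.2) ).

Definition actN (R : comPzRingType) (A : dga R) (t : R) (F : dgmodB A t)
    (G : forall l, Fc F l -> Prop) (i j : int) (b : Bc A i) (n : Nt G j) :
    Nt G (i + j) :=
  ( Madd (@dcast (fun k => Mt G k) _ _ (eqL1 i j) (MactA (i - 1) j b.1 n.2))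
         (Mscale (sgn R i) (@dcast (fun k => Mt G k) _ _ (eqL2 i j) (MactA i (j - 1) b.2 n.1))),
    MactA i j b.2 n.2 ).

Definition dg_iso (R : comPzRingType) (A : dga R) (t : R) (F : dgmodB A t)
    (G : forall l, Fc F l -> Prop)
    (xi : forall i, Mt G i -> Mt G (i - 1)) (tau : forall i, Mt G i -> Mt G i)
    (delta : forall i, Mt G i -> Mt G (i - 1 - 1))
    (alpha : forall i, Mt G i -> Mt G (i - 1))
    (phi : forall i, Fc F i -> Nt G i) : Prop :=
  [/\ forall i, bijective (phi i),
      forall i (r : R) (x y : Fc F i),
        phi i (r *: x + y) = (Mlin r (phi i x).1 (phi i y).1, Mlin r (phi i x).2 (phi i y).2),
      forall i (x : Fc F i), phi (i - 1) (Fd F i x) = dN xi tau delta alpha (phi i x)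
    & forall i j (b : Bc A i) (x : Fc F j), phi (i + j) (Fact F i j b x) = actN b (phi j x)].

(* Main.v *)
Require Import Defs.
From HB Require Import structures.
From mathcomp Require Import all_boot all_order all_algebra.
From Stdlib Require Import ClassicalEpsilon FunctionalExtensionality ProofIrrelevance Eqdep_dec Classical.
Import GRing.Theory.
Local Open Scope ring_scope.
Set Implicit Arguments.
Unset Strict Implicit.

Lemma eqTE (V : int -> Type) n (a b : V n) : existT V n a = existT V n b -> a = b.
Proof. exact: (inj_pair2_eq_dec _ (@eq_comparable _) V n a b). Qed.

Lemma dcastT (V : int -> Type) m n (e : m = n) x :
  existT V n (@dcast V m n e x) = existT V m x.
Proof. by case: n / e. Qed.

Lemma dcastE (V : int -> Type) m n (e : m = n) x y :
  existT V m x = existT V n y -> @dcast V m n e x = y.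
Proof. by move=> h; apply: eqTE; rewrite dcastT. Qed.

Lemma congrT1 (U Z : int -> Type) (k : int -> int) (f : forall i, U i -> Z (k i))
  i i' a a' : existT U i a = existT U i' a' ->
  existT Z (k i) (f i a) = existT Z (k i') (f i' a').
Proof.
move=> h; have ei : i = i' := f_equal (@projT1 _ _) h.
by subst i'; rewrite (eqTE h).
Qed.

Lemma congrT2 (U W Z : int -> Type) (f : forall i j, U i -> W j -> Z (i + j))
  i i' j j' a a' b b' : existT U i a = existT U i' a' -> existT W j b = existT W j' b' ->
  existT Z (i + j) (f i j a b) = existT Z (i' + j') (f i' j' a' b').
Proof.
move=> h1 h2; have ei : i = i' := f_equal (@projT1 _ _) h1.
have ej : j = j' := f_equal (@projT1 _ _) h2.
by subst i' j'; rewrite (eqTE h1) (eqTE h2).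
Qed.

Lemma dcastL (R : pzRingType) (V : int -> lmodType R) m n (e : m = n) (r : R) (x y : V m) :
  @dcast (fun k => V k) m n e (r *: x + y) = r *: @dcast (fun k => V k) m n e x + @dcast (fun k => V k) m n e y.
Proof. by case: n / e. Qed.

Lemma dcastD (R : pzRingType) (V : int -> lmodType R) m n (e : m = n) (x y : V m) :
  @dcast (fun k => V k) m n e (x + y) = @dcast (fun k => V k) m n e x + @dcast (fun k => V k) m n e y.
Proof. by case: n / e. Qed.

Lemma dcastZ (R : pzRingType) (V : int -> lmodType R) m n (e : m = n) (r : R) (x : V m) :
  @dcast (fun k => V k) m n e (r *: x) = r *: @dcast (fun k => V k) m n e x.
Proof. by case: n / e. Qed.

Lemma lin0 (R : pzRingType) (U V : lmodType R) (f : U -> V) :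
  (forall r x y, f (r *: x + y) = r *: f x + f y) -> f 0 = 0.
Proof.
move=> h; have := h 1 0 0; rewrite !scale1r addr0 => e.
by apply: (@addrI _ (f 0)); rewrite addr0 -e.
Qed.

Lemma sgn_sq (R : pzRingType) i : sgn R i * sgn R i = 1.
Proof. by rewrite /sgn -exprD addnn -mul2n exprM sqrrN !expr1n. Qed.

Lemma congrTD (R : pzRingType) (V : int -> lmodType R) m n (x x' y y' : _) :
  existT (fun k => V k) m x = existT (fun k => V k) n x' ->
  existT (fun k => V k) m y = existT (fun k => V k) n y' ->
  existT (fun k => V k) m (x + y : V m) = existT (fun k => V k) n (x' + y' : V n).
Proof.
move=> h1 h2; have e : m = n := f_equal (@projT1 _ _) h1.
by subst n; rewrite (eqTE h1) (eqTE h2).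
Qed.

Lemma congrTZ (R : pzRingType) (V : int -> lmodType R) m n (r : R) (x x' : _) :
  existT (fun k => V k) m x = existT (fun k => V k) n x' ->
  existT (fun k => V k) m (r *: x : V m) = existT (fun k => V k) n (r *: x' : V n).
Proof.
move=> h1; have e : m = n := f_equal (@projT1 _ _) h1.
by subst n; rewrite (eqTE h1).
Qed.

Lemma congrT0 (R : pzRingType) (V : int -> lmodType R) m n : m = n ->
  existT (fun k => V k) m (0 : V m) = existT (fun k => V k) n (0 : V n).
Proof. by move=> e; subst n. Qed.

Section Main.
Variables (R : comPzRingType) (A : dga R) (t : R) (F : dgmodB A t).
Variable (G : forall l, Fc F l -> Prop).
Hypothesis SB : semi_basis G.

Notation TT := {l : int & Fc F l}.

Lemma Mt_ext j (m1 m2 : Mt G j) : (forall l x, mfun m1 l x = mfun m2 l x) -> m1 = m2.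
Proof.
case: m1 m2 => [f1 P1] [f2 P2] /= h.
have ef : f1 = f2.
  by apply: functional_extensionality_dep => l; apply: functional_extensionality => x.
subst f2; congr MT; exact: proof_irrelevance.
Qed.

Lemma FactB0 i j (x : Fc F j) : Fact F i j 0 x = 0.
Proof. by apply: (@lin0 _ _ _ (fun b : Bc A i => Fact F i j b x)) => r b c; apply: Fact_linl. Qed.

Lemma FactX0 i j (b : Bc A i) : Fact F i j b 0 = 0.
Proof. by apply: (@lin0 _ _ _ (fun x : Fc F j => Fact F i j b x)) => r x y; apply: Fact_linr. Qed.

Lemma FactD i j (b : Bc A i) (x y : Fc F j) : Fact F i j b (x + y) = Fact F i j b x + Fact F i j b y.
Proof. by have := @Fact_linr _ _ _ F i j b 1 x y; rewrite !scale1r. Qed.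

Lemma Fd0 j : Fd F j 0 = 0.
Proof. by apply: (@lin0 _ _ _ (fun x : Fc F j => Fd F j x)) => r x y; apply: Fd_lin. Qed.

Lemma FdD j (x y : Fc F j) : Fd F j (x + y) = Fd F j x + Fd F j y.
Proof. by have := @Fd_lin _ _ _ F j 1 x y; rewrite !scale1r. Qed.

Lemma FdZ j r (x : Fc F j) : Fd F j (r *: x) = r *: Fd F j x.
Proof. by have := @Fd_lin _ _ _ F j r x 0; rewrite !addr0 Fd0 addr0. Qed.

Lemma Amul0l i j (b : Ac A j) : Amul A i j 0 b = 0.
Proof. by apply: (@lin0 _ _ _ (fun a : Ac A i => Amul A i j a b)) => r x y; apply: Amul_linl. Qed.

Lemma Ad0 i : Ad A i 0 = 0.
Proof. by apply: (@lin0 _ _ _ (fun a : Ac A i => Ad A i a)) => r x y; apply: Ad_lin. Qed.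

Definition ap n (c : forall l, Fc F l -> Bc A (n - l)) (p : TT) := c (tag p) (tagged p).

Definition term n (c : forall l, Fc F l -> Bc A (n - l)) (p : TT) : Fc F n :=
  @dcast (fun k => Fc F k) _ _ (subrK (tag p) n)
                  (Fact F (n - tag p) (tag p) (c (tag p) (tagged p)) (tagged p)).

Lemma FlincombE n c s : Flincomb c s = \sum_(p <- s) @term n c p.
Proof. by []. Qed.

Definition cl n r (c1 c2 : forall l, Fc F l -> Bc A (n - l)) : forall l, Fc F l -> Bc A (n - l) :=
  fun l g => r *: c1 l g + c2 l g.

Lemma term_lin n r c1 c2 p : term (cl r c1 c2) p = r *: @term n c1 p + term c2 p.
Proof. by rewrite /term /cl Fact_linl dcastL. Qed.

Lemma term0 n c p : ap c p = 0 -> @term n c p = 0.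
Proof. by rewrite /term /ap => ->; rewrite FactB0 tcast0. Qed.

Lemma Flincomb_lin n r c1 c2 s :
  Flincomb (cl r c1 c2) s = r *: @Flincomb _ _ _ F n c1 s + Flincomb c2 s.
Proof.
rewrite !FlincombE scaler_sumr -big_split /=.
by apply: eq_bigr => p _; rewrite term_lin.
Qed.

Lemma Flincomb_ext n (c : forall l, Fc F l -> Bc A (n - l)) u v :
  uniq u -> uniq v -> (forall p, ap c p != 0 -> p \in u) -> (forall p, ap c p != 0 -> p \in v) ->
  Flincomb c u = Flincomb c v.
Proof.
move=> Uu Uv Su Sv.
have h w : Flincomb c w = \sum_(p <- [seq p <- w | ap c p != 0]) term c p.
  rewrite FlincombE big_filter [RHS]big_mkcond /=; apply: eq_bigr => p _.
  by have [/term0 ->|] := eqVneq (ap c p) 0.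
rewrite !h; apply: perm_big; apply: uniq_perm; rewrite ?filter_uniq //.
move=> p; rewrite !mem_filter; case: (ap c p != 0) / idP => //= H.
by rewrite Su // Sv.
Qed.


Definition inG (s : seq TT) := forall p, p \in s -> @G (tag p) (tagged p).

Lemma inG_undup_cat s1 s2 : inG s1 -> inG s2 -> inG (undup (s1 ++ s2)).
Proof. by move=> h1 h2 p; rewrite mem_undup mem_cat => /orP[/h1|/h2]. Qed.

Lemma Funiq n (c1 c2 : forall l, Fc F l -> Bc A (n - l)) s1 s2 :
  uniq s1 -> uniq s2 -> inG s1 -> inG s2 ->
  (forall p, ap c1 p != 0 -> p \in s1) -> (forall p, ap c2 p != 0 -> p \in s2) ->
  Flincomb c1 s1 = Flincomb c2 s2 -> forall p, ap c1 p = ap c2 p.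
Proof.
move=> U1 U2 G1 G2 S1 S2 E p.
set u := undup (s1 ++ s2).
have Uu : uniq u := undup_uniq _.
have Gu : inG u := inG_undup_cat G1 G2.
have Su1 q : ap c1 q != 0 -> q \in u by move/S1; rewrite mem_undup mem_cat => ->.
have Su2 q : ap c2 q != 0 -> q \in u by move/S2; rewrite mem_undup mem_cat orbC => ->.
have E' : Flincomb (cl (-1) c2 c1) u = 0.
  rewrite Flincomb_lin (Flincomb_ext Uu U1 Su1 S1) (Flincomb_ext Uu U2 Su2 S2) E.
  by rewrite scaleN1r addNr.
case Hp: (p \in u).
  have := (proj2 SB) n _ u Uu Gu E' p Hp; rewrite /cl /ap /= scaleN1r => /eqP.
  by rewrite addr_eq0 eqr_opp => /eqP ->.
have h1 : ap c1 p = 0 by apply/eqP; apply: contraFT Hp => /Su1.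
have h2 : ap c2 p = 0 by apply/eqP; apply: contraFT Hp => /Su2.
by rewrite h1 h2.
Qed.

Definition rep n (x : Fc F n) := constructive_indefinite_description _ ((proj1 SB) n x).
Definition cfx n x := proj1_sig (@rep n x).
Definition spx n x := proj1_sig (constructive_indefinite_description _ (proj2_sig (@rep n x))).
Lemma spx_spec n x : [/\ uniq (@spx n x), inG (spx x) & x = Flincomb (cfx x) (spx x)].
Proof.
rewrite /spx; case: constructive_indefinite_description => s [U1 G1 E] /=.
by split.
Qed.

Definition cf n (x : Fc F n) : forall l, Fc F l -> Bc A (n - l) :=
  fun l g => if existT (fun k => Fc F k) l g \in spx x then @cfx n x l g else 0.
Arguments cf {n} x l g.

Lemma cf_supp n (x : Fc F n) p : ap (cf x) p != 0 -> p \in spx x.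
Proof. by rewrite /ap /cf; case: p => l g /=; case: ifP => // _; rewrite eqxx. Qed.

Lemma cf_spec n (x : Fc F n) : x = Flincomb (cf x) (spx x).
Proof.
case: (spx_spec x) => _ _ E; rewrite {1}E !FlincombE.
apply: eq_big_seq => p Hp; rewrite /term /cf.
by case: p Hp => l g /= ->.
Qed.

Lemma cf_G n (x : Fc F n) l g : ~ @G l g -> cf x l g = 0.
Proof.
move=> nG; rewrite /cf; case: ifP => // H; exfalso; apply: nG.
by case: (spx_spec x) => _ /(_ _ H).
Qed.

Lemma cf_uniq n (x : Fc F n) c s : uniq s -> inG s -> (forall p, ap c p != 0 -> p \in s) ->
  x = Flincomb c s -> forall p, ap c p = ap (cf x) p.
Proof.
move=> U1 G1 S1 E; case: (spx_spec x) => U2 G2 _.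
apply: (Funiq U1 U2 G1 G2 S1 (@cf_supp n x)); by rewrite -E -cf_spec.
Qed.


Lemma dcastK (V : int -> Type) m n (e : m = n) (y : V n) : @dcast V m n e (@dcast V n m (esym e) y) = y.
Proof. by case: n / e y. Qed.
Lemma dcastKV (V : int -> Type) m n (e : m = n) (y : V m) : @dcast V n m (esym e) (@dcast V m n e y) = y.
Proof. by case: n / e. Qed.

Definition e1 (n l : int) : n - l - 1 = n - 1 - l := addrAC n (-l) (-1).

Definition phi1f n (x : Fc F n) : Mfun F (n - 1) :=
  fun l g => @dcast (fun k => Ac A k) _ _ (e1 n l) (cf x l g).1.
Definition phi2f n (x : Fc F n) : Mfun F n := fun l g => (cf x l g).2.

Lemma phi1_adm n (x : Fc F n) : Madm G (phi1f x).
Proof.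
split; first by move=> l g nG; rewrite /phi1f cf_G //= tcast0.
exists (spx x) => l g h; apply: (@cf_supp n x (existT _ l g)); apply/eqP => e.
by apply: h; rewrite /phi1f; rewrite /ap /= in e; rewrite e /= tcast0.
Qed.

Lemma phi2_adm n (x : Fc F n) : Madm G (phi2f x).
Proof.
split; first by move=> l g nG; rewrite /phi2f cf_G.
exists (spx x) => l g h; apply: (@cf_supp n x (existT _ l g)); apply/eqP => e.
by apply: h; rewrite /phi2f; rewrite /ap /= in e; rewrite e.
Qed.

Definition phi n (x : Fc F n) : Nt G n := (MT (phi1_adm x), MT (phi2_adm x)).

Lemma phi1E n (x : Fc F n) l g : mfun (phi x).1 l g = @dcast (fun k => Ac A k) _ _ (e1 n l) (cf x l g).1.
Proof. by []. Qed.
Lemma phi2E n (x : Fc F n) l g : mfun (phi x).2 l g = (cf x l g).2.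
Proof. by []. Qed.

Definition msupp j (m : Mt G j) : seq TT :=
  proj1_sig (constructive_indefinite_description _ (proj2 (mP m))).
Lemma msupp_spec j (m : Mt G j) l x : mfun m l x <> 0 -> existT _ l x \in msupp m.
Proof. by rewrite /msupp; case: constructive_indefinite_description => s /= h; apply: h. Qed.

Definition cN n (nn : Nt G n) : forall l, Fc F l -> Bc A (n - l) :=
  fun l g => (@dcast (fun k => Ac A k) _ _ (esym (e1 n l)) (mfun nn.1 l g), mfun nn.2 l g).
Arguments cN {n} nn l g.

Definition sN n (nn : Nt G n) : seq TT :=
  undup [seq p <- msupp nn.1 ++ msupp nn.2 | ap (cN nn) p != 0].

Lemma sN_uniq n (nn : Nt G n) : uniq (sN nn).
Proof. exact: undup_uniq. Qed.

Lemma cN_supp n (nn : Nt G n) p : ap (cN nn) p != 0 -> p \in sN nn.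
Proof.
move=> h; rewrite mem_undup mem_filter h /= mem_cat.
case: p h => l g; rewrite /ap /cN /= => h.
have [e1'|n1] := eqVneq (mfun nn.1 l g) 0.
  have [e2|n2] := eqVneq (mfun nn.2 l g) 0.
    by move: h; rewrite e1' e2 tcast0 eqxx.
  by rewrite (msupp_spec (elimN eqP n2)) orbT.
by rewrite (msupp_spec (elimN eqP n1)).
Qed.

Lemma sN_G n (nn : Nt G n) : inG (sN nn).
Proof.
move=> p; rewrite mem_undup mem_filter => /andP[h _].
case: p h => l g; rewrite /ap /cN /= => h.
apply: NNPP => nG; move: h.
by rewrite (proj1 (mP nn.1) l g nG) (proj1 (mP nn.2) l g nG) tcast0 eqxx.
Qed.

Definition psi n (nn : Nt G n) : Fc F n := Flincomb (cN nn) (sN nn).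

Lemma phi_psi n (nn : Nt G n) : phi (psi nn) = nn.
Proof.
have h := cf_uniq (sN_uniq nn) (@sN_G n nn) (@cN_supp n nn) (erefl (psi nn)).
case: nn h => m1 m2 h; congr pair; apply: Mt_ext => l g.
  by move: (h (existT _ l g)); rewrite /ap /cN /= /phi1f => <-; rewrite dcastK.
by move: (h (existT _ l g)); rewrite /ap /cN /= /phi2f => <-.
Qed.

Lemma cN_phi n (x : Fc F n) : cN (phi x) = cf x.
Proof.
apply: functional_extensionality_dep => l; apply: functional_extensionality => g.
by rewrite /cN phi1E phi2E dcastKV; case: (cf x l g).
Qed.

Lemma psi_phi n (x : Fc F n) : psi (phi x) = x.
Proof.
rewrite {2}(cf_spec x) /psi.
have S1 := @cN_supp n (phi x); have U1 := sN_uniq (phi x).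
rewrite cN_phi in S1 *.
case: (spx_spec x) => U2 _ _.
exact: Flincomb_ext U1 U2 S1 (@cf_supp n x).
Qed.

Lemma phi_inj n : injective (@phi n).
Proof. exact: can_inj (@psi_phi n). Qed.


Lemma cf_lin n r (x y : Fc F n) p : ap (cl r (cf x) (cf y)) p = ap (cf (r *: x + y)) p.
Proof.
set u := undup (spx x ++ spx y).
have Uu : uniq u := undup_uniq _.
case: (spx_spec x) => Ux Gx _; case: (spx_spec y) => Uy Gy _.
have Gu : inG u := inG_undup_cat Gx Gy.
have Sx q : ap (cf x) q != 0 -> q \in u by move/cf_supp; rewrite mem_undup mem_cat => ->.
have Sy q : ap (cf y) q != 0 -> q \in u by move/cf_supp; rewrite mem_undup mem_cat orbC => ->.
apply: (cf_uniq Uu Gu).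
  move=> q; rewrite /ap /cl.
  have [hx|/Sx //] := eqVneq (ap (cf x) q) 0; have [hy|/Sy //] := eqVneq (ap (cf y) q) 0.
  by rewrite /ap in hx hy; rewrite hx hy scaler0 addr0 eqxx.
rewrite Flincomb_lin (Flincomb_ext Uu Ux Sx (@cf_supp n x)) (Flincomb_ext Uu Uy Sy (@cf_supp n y)).
by rewrite -!cf_spec.
Qed.

Lemma phi1L n r (x y : Fc F n) l g :
  mfun (phi (r *: x + y)).1 l g = r *: mfun (phi x).1 l g + mfun (phi y).1 l g.
Proof. by rewrite !phi1E; move: (cf_lin r x y (existT _ l g)); rewrite /ap /cl /= => <-; rewrite dcastL. Qed.

Lemma phi2L n r (x y : Fc F n) l g :
  mfun (phi (r *: x + y)).2 l g = r *: mfun (phi x).2 l g + mfun (phi y).2 l g.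
Proof. by rewrite !phi2E; move: (cf_lin r x y (existT _ l g)); rewrite /ap /cl /= => <-. Qed.

Lemma phi_lin n r (x y : Fc F n) :
  phi (r *: x + y) = (Mlin r (phi x).1 (phi y).1, Mlin r (phi x).2 (phi y).2).
Proof.
rewrite [LHS]surjective_pairing; congr pair; apply: Mt_ext => l g.
  exact: phi1L.
exact: phi2L.
Qed.

Lemma phi10 (n l : int) (g : Fc F l) : mfun (phi (0 : Fc F n)).1 l g = 0.
Proof.
have := phi1L 1 (0 : Fc F n) 0 g; rewrite !scale1r addr0 => h.
by apply: (@addrI _ (mfun (phi (0 : Fc F n)).1 l g)); rewrite addr0 -h.
Qed.
Lemma phi20 (n l : int) (g : Fc F l) : mfun (phi (0 : Fc F n)).2 l g = 0.
Proof.
have := phi2L 1 (0 : Fc F n) 0 g; rewrite !scale1r addr0 => h.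
by apply: (@addrI _ (mfun (phi (0 : Fc F n)).2 l g)); rewrite addr0 -h.
Qed.

Lemma phi1D n (x y : Fc F n) l g :
  mfun (phi (x + y)).1 l g = mfun (phi x).1 l g + mfun (phi y).1 l g.
Proof. by have := phi1L 1 x y g; rewrite !scale1r. Qed.
Lemma phi2D n (x y : Fc F n) l g :
  mfun (phi (x + y)).2 l g = mfun (phi x).2 l g + mfun (phi y).2 l g.
Proof. by have := phi2L 1 x y g; rewrite !scale1r. Qed.
Lemma phi1Z n r (x : Fc F n) l g :
  mfun (phi (r *: x)).1 l g = r *: mfun (phi x).1 l g.
Proof. by have := phi1L r x 0 g; rewrite !addr0 phi10 addr0. Qed.
Lemma phi2Z n r (x : Fc F n) l g :
  mfun (phi (r *: x)).2 l g = r *: mfun (phi x).2 l g.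
Proof. by have := phi2L r x 0 g; rewrite !addr0 phi20 addr0. Qed.

Lemma phi1T n n' (e : n = n') (y : Fc F n) l g :
  existT (fun k => Ac A k) (n' - 1 - l) (mfun (phi (@dcast (fun k => Fc F k) _ _ e y)).1 l g)
  = existT (fun k => Ac A k) (n - 1 - l) (mfun (phi y).1 l g).
Proof. by case: n' / e. Qed.
Lemma phi2T n n' (e : n = n') (y : Fc F n) l g :
  existT (fun k => Ac A k) (n' - l) (mfun (phi (@dcast (fun k => Fc F k) _ _ e y)).2 l g)
  = existT (fun k => Ac A k) (n - l) (mfun (phi y).2 l g).
Proof. by case: n' / e. Qed.

Lemma mfunT j j' (e : j = j') (m : Mt G j) l g :
  existT (fun k => Ac A k) (j' - l) (mfun (@dcast (fun k => Mt G k) _ _ e m) l g)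
  = existT (fun k => Ac A k) (j - l) (mfun m l g).
Proof. by case: j' / e. Qed.


Lemma MactAT i j (a : Ac A i) (m : Mt G j) l g :
  existT (fun k => Ac A k) (i + j - l) (mfun (MactA i j a m) l g)
  = existT (fun k => Ac A k) (i + (j - l)) (Amul A i (j - l) a (mfun m l g)).
Proof. exact: dcastT. Qed.

Lemma sndT m n (e : m = n) (b : Bc A m) :
  existT (fun k => Ac A k) n (@dcast (fun k => Bc A k) _ _ e b).2 = existT (fun k => Ac A k) m b.2.
Proof. by case: n / e. Qed.
Lemma fstT m n (e : m = n) (b : Bc A m) :
  existT (fun k => Ac A k) (n - 1) (@dcast (fun k => Bc A k) _ _ e b).1
  = existT (fun k => Ac A k) (m - 1) b.1.
Proof. by case: n / e. Qed.

Lemma mulB0 i j (b : Bc A i) : mulB b (0 : Bc A j) = 0.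
Proof. by rewrite /mulB /= !Amul0r !tcast0 scaler0 addr0. Qed.

Definition e2 (i j l : int) : i + (j - l) = i + j - l := addrA i j (-l).

Lemma term_act i j (b : Bc A i) l (g : Fc F l) (c : Bc A (j - l)) :
  Fact F i j b (@dcast (fun k => Fc F k) _ _ (subrK l j) (Fact F (j - l) l c g)) =
  @dcast (fun k => Fc F k) _ _ (subrK l (i + j))
     (Fact F (i + j - l) l (@dcast (fun k => Bc A k) _ _ (e2 i j l) (mulB b c)) g).
Proof.
apply: eqTE; rewrite dcastT.
transitivity (existT (fun k => Fc F k) (i + (j - l) + l) (Fact F (i + (j - l)) l (mulB b c) g)); last first.
  symmetry; exact: (congrT2 (Fact F) (@dcastT _ _ _ _ _) (erefl _)).
rewrite Fact_assoc dcastT.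
exact: (congrT2 (Fact F) (erefl _) (@dcastT _ _ _ _ _)).
Qed.

Lemma cf_out n (x : Fc F n) p : p \notin spx x -> ap (cf x) p = 0.
Proof. by move=> H; apply/eqP; apply: contraNT H => /cf_supp. Qed.

Lemma cf_act i j (b : Bc A i) (x : Fc F j) l (g : Fc F l) :
  cf (Fact F i j b x) l g = @dcast (fun k => Bc A k) _ _ (e2 i j l) (mulB b (cf x l g)).
Proof.
pose c1 : forall l, Fc F l -> Bc A (i + j - l) :=
  fun l g => @dcast (fun k => Bc A k) _ _ (e2 i j l) (mulB b (cf x l g)).
case: (spx_spec x) => U1 G1 _.
have S : forall p, ap c1 p != 0 -> p \in spx x.
  move=> p; apply: contraNT => /cf_out; rewrite /ap /c1 => ->.
  by rewrite mulB0 tcast0.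
have E : Fact F i j b x = Flincomb c1 (spx x).
  rewrite {1}(cf_spec x) !FlincombE (big_morph _ (FactD b) (@FactX0 i j b)).
  by apply: eq_bigr => p _; rewrite /term term_act.
by have := @cf_uniq _ (Fact F i j b x) c1 (spx x) U1 G1 S E (existT _ l g).
Qed.


Lemma phi_act i j (b : Bc A i) (x : Fc F j) : phi (Fact F i j b x) = actN b (phi x).
Proof.
rewrite [LHS]surjective_pairing; congr pair; apply: Mt_ext => l g.
  rewrite /= !scale1r addr0 /phi1f; apply: (@eqTE (fun k => Ac A k)).
  rewrite dcastT cf_act fstT /=.
  apply: congrTD.
    rewrite dcastT mfunT MactAT; exact: erefl.
  apply: congrTZ; rewrite dcastT mfunT MactAT.
  exact: (congrT2 (Amul A) (erefl _) (esym (@dcastT _ _ _ _ _))).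
apply: (@eqTE (fun k => Ac A k)); rewrite MactAT /= /phi2f cf_act sndT; exact: erefl.
Qed.


Lemma mfun_cast0 j j' (e : j = j') (m : Mt G j) l (g : Fc F l) :
  mfun m l g = 0 -> mfun (@dcast (fun k => Mt G k) _ _ e m) l g = 0.
Proof. by case: j' / e. Qed.
Lemma phi1_cast0 n n' (e : n = n') (y : Fc F n) l (g : Fc F l) :
  mfun (phi y).1 l g = 0 -> mfun (phi (@dcast (fun k => Fc F k) _ _ e y)).1 l g = 0.
Proof. by case: n' / e. Qed.
Lemma phi2_cast0 n n' (e : n = n') (y : Fc F n) l (g : Fc F l) :
  mfun (phi y).2 l g = 0 -> mfun (phi (@dcast (fun k => Fc F k) _ _ e y)).2 l g = 0.
Proof. by case: n' / e. Qed.

Lemma MactA0l i j (m : Mt G j) l (g : Fc F l) : mfun (MactA i j (0 : Ac A i) m) l g = 0.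
Proof. by rewrite /= Amul0l tcast0. Qed.
Lemma MactA0r i j (a : Ac A i) l (g : Fc F l) : mfun (MactA i j a (Mzero G j)) l g = 0.
Proof. by rewrite /= Amul0r tcast0. Qed.

Definition iota j (m : Mt G j) : Fc F j := psi (Mzero G (j - 1), m).
Lemma phi_iota j (m : Mt G j) : phi (iota m) = (Mzero G (j - 1), m).
Proof. exact: phi_psi. Qed.

Definition alpha j (m : Mt G j) : Mt G (j - 1) := (phi (Fd F j (iota m))).2.
Definition delta j (m : Mt G j) : Mt G (j - 1 - 1) := (phi (Fd F j (iota m))).1.

Lemma iota_act i j (a : Ac A i) (m : Mt G j) :
  Fact F i j (0, a) (iota m) = iota (MactA i j a m).
Proof.
apply: phi_inj; rewrite phi_act !phi_iota; congr pair; apply: Mt_ext => l g /=.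
  rewrite mfun_cast0; last exact: MactA0l.
  rewrite mfun_cast0; last exact: MactA0r.
  by rewrite !scaler0 !addr0.
Qed.


Lemma alpha_act i j (a : Ac A i) (m : Mt G j) :
  alpha (MactA i j a m) =
  Madd (@dcast (fun k => Mt G k) _ _ (eqL1 i j) (MactA (i - 1) j (Ad A i a) m))
       (Mscale (sgn R i) (@dcast (fun k => Mt G k) _ _ (eqL2 i j) (MactA i (j - 1) a (alpha m)))).
Proof.
apply: Mt_ext => l g.
rewrite /alpha -iota_act Fd_leibniz phi2D phi2Z /= scale1r addr0.
congr (_ + _ *: _).
  apply: (@eqTE (fun k => Ac A k)); rewrite phi2T mfunT phi_act phi_iota /dB /= scaler0 add0r.
  exact: erefl.
apply: (@eqTE (fun k => Ac A k)); rewrite phi2T mfunT phi_act /=; exact: erefl.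
Qed.

Lemma delta_act i j (a : Ac A i) (m : Mt G j) :
  delta (MactA i j a m) =
  @dcast (fun k => Mt G k) _ _ (eqS2 i j) (MactA i (j - 1 - 1) a (delta m)).
Proof.
apply: Mt_ext => l g.
rewrite /delta -iota_act Fd_leibniz phi1D phi1Z.
rewrite phi1_cast0; last first.
  rewrite phi_act phi_iota /= mfun_cast0; last by rewrite /= Ad0 oppr0 Amul0l tcast0.
  rewrite mfun_cast0; last exact: MactA0r.
  by rewrite !scaler0 !addr0.
rewrite add0r.
set Y := mfun (dcast _ _) l g.
suff -> : mfun (phi (@dcast (fun k => Fc F k) _ _ (eqL2 i j) (Fact F i (j - 1) (0, a) (Fd F j (iota m))))).1 l g
   = sgn R i *: Y by rewrite scalerA sgn_sq scale1r.
apply: (@eqTE (fun k => Ac A k)); rewrite phi1T phi_act /=.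
rewrite mfun_cast0; last exact: MactA0l.
rewrite scaler0 add0r addr0; apply: congrTZ; rewrite /Y !mfunT; exact: erefl.
Qed.


Definition e0 : (0 : int) = 1 - 1 := esym (subrr 1).
Definition eB : Bc A 1 := (@dcast (fun k => Ac A k) _ _ e0 (Aone A), 0).

Lemma AoneT k (a : Ac A k) :
  existT (fun k => Ac A k) (1 - 1 + k) (Amul A (1 - 1) k (@dcast (fun k => Ac A k) _ _ e0 (Aone A)) a)
  = existT (fun k => Ac A k) k a.
Proof.
rewrite (congrT2 (Amul A) (@dcastT _ _ _ _ _) (erefl (existT (fun k => Ac A k) k a))).
by have h := @Amul_1l _ A k a; rewrite -[in RHS]h dcastT.
Qed.

Lemma AmulZl i j r (a : Ac A i) (b : Ac A j) : Amul A i j (r *: a) b = r *: Amul A i j a b.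
Proof. by have := @Amul_linl _ A i j b r a 0; rewrite !addr0 Amul0l addr0. Qed.

Definition e3 (i : int) : 1 + (i - 1) = i := etrans (addrC 1 (i - 1)) (subrK 1 i).

Lemma Fd_cast a b (e : a = b) (y : Fc F a) :
  Fd F b (@dcast (fun k => Fc F k) _ _ e y) =
  @dcast (fun k => Fc F k) _ _ (f_equal (fun k => k - 1) e) (Fd F a y).
Proof. by case: b / e. Qed.

Lemma decomp i (x : Fc F i) :
  x = @dcast (fun k => Fc F k) _ _ (e3 i) (Fact F 1 (i - 1) eB (iota (phi x).1)) + iota (phi x).2.
Proof.
apply: phi_inj; apply: injective_projections; apply: Mt_ext => l g.
  rewrite phi1D phi_iota /= addr0; symmetry.
  apply: (@eqTE (fun k => Ac A k)); rewrite phi1T phi_act phi_iota /=.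
  rewrite (@mfun_cast0 _ _ _ (MactA 1 (i - 1 - 1) 0 _)); last exact: MactA0l.
  rewrite scaler0 !addr0 scale1r mfunT MactAT; exact: AoneT.
rewrite phi2D phi2_cast0 ?add0r ?phi_iota //.
rewrite phi_act; exact: MactA0l.
Qed.


Lemma sgn1 : sgn R 1 = -1.
Proof. by rewrite /sgn expr1. Qed.

Lemma phi_d i (x : Fc F i) :
  phi (Fd F i x) = dN (fun i m => Mopp (@alpha i m)) (fun i m => Mscale t m) delta alpha (phi x).
Proof.
rewrite {1}(decomp x) FdD Fd_cast.
apply: injective_projections; apply: Mt_ext => l g.
  rewrite phi1D /= scale1r addr0; congr (_ + _).
  apply: (@eqTE (fun k => Ac A k)); rewrite phi1T Fd_leibniz phi1D phi1Z.
  rewrite phi1_cast0; last first.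
    rewrite phi_act phi_iota /=.
    rewrite mfun_cast0; last first.
      have -> : Ad A (1 - 1) (@dcast (fun k => Ac A k) _ _ e0 (Aone A)) = 0 by apply: Apos.
      by rewrite oppr0; exact: MactA0l.
    by rewrite mfun_cast0 ?scaler0 ?addr0 //; exact: MactA0r.
  rewrite add0r sgn1; apply: congrTZ.
  rewrite phi1T phi_act /=.
  rewrite (@mfun_cast0 _ _ _ (MactA 1 (i - 1 - 1 - 1) 0 _)); last exact: MactA0l.
  rewrite scaler0 !addr0 scale1r mfunT MactAT; exact: AoneT.
rewrite phi2D /= scale1r addr0; congr (_ + _).
apply: (@eqTE (fun k => Ac A k)); rewrite phi2T Fd_leibniz phi2D phi2Z.
rewrite (@phi2_cast0 _ _ _ (Fact F 1 (i - 1 - 1) eB _)); last by rewrite phi_act; exact: MactA0l.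
rewrite scaler0 addr0 phi2T phi_act phi_iota /= Ad0 addr0 dcastT AmulZl.
apply: congrTZ; exact: AoneT.
Qed.


Lemma alpha_sq j (m : Mt G j) : alpha (alpha m) = Mopp (Mscale t (delta m)).
Proof.
apply: Mt_ext => l g.
have e : 1 *: (t *: mfun (delta m) l g + 0) + mfun (alpha (alpha m)) l g = 0.
  have h := phi_d (Fd F j (iota m)); rewrite Fd_sq in h.
  transitivity (mfun (phi (0 : Fc F (j - 1 - 1))).2 l g); last exact: phi20.
  by rewrite h.
move/eqP: e; rewrite scale1r addr0 (addrC (t *: _)) addr_eq0 => /eqP ->.
by rewrite [RHS]/= !addr0 scaleN1r.
Qed.

Lemma delta_alpha j (m : Mt G j) : delta (alpha m) = alpha (delta m).
Proof.
apply: Mt_ext => l g.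
have e : 1 *: (-1 *: mfun (alpha (delta m)) l g + 0) + mfun (delta (alpha m)) l g = 0.
  have h := phi_d (Fd F j (iota m)); rewrite Fd_sq in h.
  transitivity (mfun (phi (0 : Fc F (j - 1 - 1))).1 l g); last exact: phi10.
  by rewrite h.
move/eqP: e; rewrite scale1r addr0 scaleN1r (addrC (- _)) subr_eq0 => /eqP.
by [].
Qed.

Lemma iota_lin j r (m1 m2 : Mt G j) : iota (Mlin r m1 m2) = r *: iota m1 + iota m2.
Proof.
apply: phi_inj; rewrite phi_lin !phi_iota; congr pair; apply: Mt_ext => l g /=.
by rewrite scaler0 addr0.
Qed.

Lemma alpha_lin j r (m1 m2 : Mt G j) : alpha (Mlin r m1 m2) = Mlin r (alpha m1) (alpha m2).
Proof. by rewrite /alpha iota_lin Fd_lin phi_lin. Qed.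

Lemma delta_lin j r (m1 m2 : Mt G j) : delta (Mlin r m1 m2) = Mlin r (delta m1) (delta m2).
Proof. by rewrite /delta iota_lin Fd_lin phi_lin. Qed.

End Main.

Unset Implicit Arguments.

Theorem lemma2p8 (R : comPzRingType) (HR : noetherian R) (A : dga R) (t : R)
    (F : dgmodB A t) (G : forall l, Fc F l -> Prop) :
  bounded_below F -> semi_basis G ->
  exists (xi : forall i, Mt G i -> Mt G (i - 1))
         (tau : forall i, Mt G i -> Mt G i)
         (delta : forall i, Mt G i -> Mt G (i - 1 - 1))
         (alpha : forall i, Mt G i -> Mt G (i - 1)),
    (* R-module homomorphisms *)
    (forall i, Mlinear (xi i)) /\ (forall i, Mlinear (tau i)) /\
    (forall i, Mlinear (delta i)) /\ (forall i, Mlinear (alpha i)) /\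
    (* xi_i = - alpha_i *)
    (forall i (m : Mt G i), xi i m = Mopp (alpha i m)) /\
    (* tau_i = t *)
    (forall i (m : Mt G i), tau i m = Mscale t m) /\
    (* alpha_{i-1} alpha_i = - t delta_i *)
    (forall i (m : Mt G i), alpha (i - 1) (alpha i m) = Mopp (Mscale t (delta i m))) /\
    (* delta_i alpha_{i+1} = alpha_{i-1} delta_{i+1}  (stated with i+1 =: k) *)
    (forall k (m : Mt G k), delta (k - 1) (alpha k m) = alpha (k - 1 - 1) (delta k m)) /\
    (* delta_{i+j}(gamma_{i,s} m_j) = gamma_{i,s} delta_j(m_j) *)
    (forall i j (s : 'I_(Ar A i)) (m : Mt G j),
       delta (i + j) (MactA i j (Agam A i s) m) =
       @dcast (fun k => Mt G k) _ _ (eqS2 i j) (MactA i (j - 1 - 1) (Agam A i s) (delta j m))) /\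
    (* alpha_{i+j}(gamma_{i,s} m_j) = d^A_i(gamma_{i,s}) m_j + (-1)^i gamma_{i,s} alpha_j(m_j) *)
    (forall i j (s : 'I_(Ar A i)) (m : Mt G j),
       alpha (i + j) (MactA i j (Agam A i s) m) =
       Madd (@dcast (fun k => Mt G k) _ _ (eqL1 i j) (MactA (i - 1) j (Ad A i (Agam A i s)) m))
            (Mscale (sgn R i) (@dcast (fun k => Mt G k) _ _ (eqL2 i j)
                                 (MactA i (j - 1) (Agam A i s) (alpha j m))))) /\
    (* F is isomorphic to N as DG B-modules *)
    (exists phi : forall i, Fc F i -> Nt G i, dg_iso xi tau delta alpha phi).
Proof.
move=> _ SB.
exists (fun i m => Mopp (@alpha R A t F G SB i m)), (fun i m => Mscale t m),
  (@delta R A t F G SB), (@alpha R A t F G SB).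
split.
  move=> i r m1 m2; rewrite alpha_lin; apply: Mt_ext => l g /=.
  by rewrite !addr0 scalerDr !scalerA mulrC.
split.
  move=> i r m1 m2; apply: Mt_ext => l g /=.
  by rewrite !addr0 scalerDr !scalerA mulrC.
split; first by move=> i r m1 m2; exact: delta_lin.
split; first by move=> i r m1 m2; exact: alpha_lin.
split; first by [].
split; first by [].
split; first by move=> i m; exact: alpha_sq.
split; first by move=> k m; exact: delta_alpha.
split; first by move=> i j s m; exact: delta_act.
split; first by move=> i j s m; exact: alpha_act.
exists (@phi R A t F G SB); split.
- move=> i; exists (@psi R A t F G i); [exact: psi_phi | exact: phi_psi].
- move=> i r x y; exact: phi_lin.
- move=> i x; exact: phi_d.
- move=> i j b x; exact: phi_act.
Qed.
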